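(* Let $f=z^4+f_2z^2+f_3z+f_4$ with $f_j\in\mathbb{R}[x,y]$ homogeneous of degree $j$, and let $f=p_1^2+p_2^2+p_3^2$ with quadratic forms $p_i\in\mathbb{R}[x,y,z]$. Write $p_i=u_iz^2+v_iz+w_i$ with $u_i\in\mathbb{R}$, $v_i,w_i\in\mathbb{R}[x,y]$ homogeneous of degrees $1,2$. Then $u=(u_1,u_2,u_3)^t$ is a unit vector; choose $S\in O_3(\mathbb{R})$ with $Su=(1,0,0)^t$, let $(v'_i)=Sv$, $(w'_i)=Sw$, and put $\xi=2w'_1$, $\eta=2(v'_2w'_3-v'_3w'_2)$. Then $\eta^2+f_3^2=(f_2-\xi)(4f_4-\xi^2)$ and both $f_2-\xi$ and $4f_4-\xi^2$ are psd. Moreover $\xi$ does not depend on the choice of $S$, and depends only on the orthogonal equivalence class of the representation $f=\sum_i p_i^2$.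
   Context: psd means taking only nonnegative values on real points. Two representations $f=\sum_{i=1}^3p_i^2=\sum_{i=1}^3p_i'^2$ with quadratic forms $p_i,p_i'$ are (orthogonally) equivalent if there is $S=(s_{ij})\in O_3(\mathbb{R})$ with $p'_j=\sum_i s_{ij}p_i$ for $j=1,2,3$. *)

(* Defs.v *)
From HB Require Import structures.
From mathcomp Require Import all_boot all_order all_algebra.
From mathcomp Require Export mpoly.
Set Implicit Arguments. Unset Strict Implicit. Unset Printing Implicit Defensive.
Import Order.TTheory GRing.Theory Num.Theory.
Local Open Scope ring_scope.

(* Binary forms live in {mpoly R[2]} ('X_0 = x, 'X_1 = y); ternary forms are
   viewed as elements of R[x,y][z] = {poly {mpoly R[2]}} (z = 'X). *)

Definition psd2 (R : rcfType) (g : {mpoly R[2]}) : Prop :=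
  forall a : 'I_2 -> R, 0 <= g.@[a].

Definition orthogonal3 (R : rcfType) (S : 'M[R]_3) : Prop := S *m S^T = 1%:M.

Definition mact (R : rcfType) (V : lmodType R) (S : 'M[R]_3) (v : 'I_3 -> V)
  : 'I_3 -> V := fun i => \sum_(j < 3) S i j *: v j.

Definition qform (R : rcfType) (u : R) (v w : {mpoly R[2]}) : {poly {mpoly R[2]}} :=
  (u%:MP)%:P * 'X^2 + v%:P * 'X + w%:P.

(* xi = 2 w'_1 and eta = 2 (v'_2 w'_3 - v'_3 w'_2) for (v',w') = (S v, S w). *)
Definition xi_of (R : rcfType) (S : 'M[R]_3) (w : 'I_3 -> {mpoly R[2]}) : {mpoly R[2]} :=
  2%:R * mact S w 0.
Definition eta_of (R : rcfType) (S : 'M[R]_3) (v w : 'I_3 -> {mpoly R[2]}) : {mpoly R[2]} :=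
  2%:R * (mact S v 1 * mact S w 2 - mact S v 2 * mact S w 1).

Definition maps_to_e1 (R : rcfType) (S : 'M[R]_3) (u : 'I_3 -> R) : Prop :=
  forall i : 'I_3, \sum_(j < 3) S i j * u j = (i == 0 :> 'I_3)%:R.

(* Main.v *)
Require Import Defs.
From HB Require Import structures.
From mathcomp Require Import all_boot all_order all_algebra.
From mathcomp Require Import mpoly.
From mathcomp Require Import ring.
Import Order.TTheory GRing.Theory Num.Theory.
Local Open Scope ring_scope.
Set Implicit Arguments.
Section H.
Context {R : rcfType}.
Local Notation MP := {mpoly R[2]}.

Lemma qsq (u : R) (v w : MP) : qform u v w ^+ 2 =
 (u%:MP * u%:MP)%:P * 'X^4 + (2%:R * (u%:MP * v))%:P * 'X^3 + (v * v + 2%:R * (u%:MP * w))%:P * 'X^2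
  + (2%:R * (v * w))%:P * 'X + (w * w)%:P.
Proof. rewrite /qform. ring. Qed.

Lemma coefQ (a4 a3 a2 a1 a0 : MP) k :
  (a4%:P * 'X^4 + a3%:P * 'X^3 + a2%:P * 'X^2 + a1%:P * 'X + a0%:P)`_k =
  a4 * (k == 4)%:R + a3 * (k == 3)%:R + a2 * (k == 2)%:R + a1 * (k == 1)%:R + (if k == 0 then a0 else 0).
Proof. by rewrite !coefD !coefCM !coefXn coefX coefC. Qed.

Lemma sum_delta (g : 'I_3 -> MP) (j : 'I_3) : \sum_k (j == k)%:R *: g k = g j.
Proof.
rewrite (bigD1 j) //= eqxx scale1r big1 ?addr0 // => k /negbTE.
by rewrite eq_sym => ->; rewrite scale0r.
Qed.

Lemma sum_deltaR (g : 'I_3 -> R) (j : 'I_3) : \sum_k (j == k)%:R * g k = g j.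
Proof.
rewrite (bigD1 j) //= eqxx mul1r big1 ?addr0 // => k /negbTE.
by rewrite eq_sym => ->; rewrite mul0r.
Qed.

Lemma bil (S : 'M[R]_3) : S^T *m S = 1%:M -> forall x y : 'I_3 -> MP,
  \sum_i mact S x i * mact S y i = \sum_j x j * y j.
Proof.
move=> HS x y; rewrite /mact.
transitivity (\sum_j \sum_k (\sum_i S i j * S i k) *: (x j * y k)).
  rewrite (eq_bigr (fun i => \sum_j \sum_k (S i j * S i k) *: (x j * y k))); last first.
    move=> i _; rewrite mulr_suml; apply: eq_bigr => j _; rewrite mulr_sumr.
    by apply: eq_bigr => k _; rewrite -scalerAl -scalerAr scalerA.
  rewrite exchange_big; apply: eq_bigr => j _; rewrite exchange_big.
  by apply: eq_bigr => k _; rewrite scaler_suml.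
apply: eq_bigr => j _.
rewrite -[RHS](sum_delta (fun k => x j * y k)); apply: eq_bigr => k _.
have := congr1 (fun M : 'M[R]_3 => M j k) HS; rewrite !mxE.
under eq_bigr do rewrite mxE.
by move=> ->.
Qed.
Lemma orthT (S : 'M[R]_3) : orthogonal3 S -> S^T *m S = 1%:M.
Proof. by move=> HS; apply: mulmx1C. Qed.

Lemma row0 (S : 'M[R]_3) (u : 'I_3 -> R) : orthogonal3 S -> maps_to_e1 S u ->
  forall j, S 0 j = u j.
Proof.
move=> /orthT HS Hu j.
rewrite -[RHS](sum_deltaR u j).
transitivity (\sum_i S i j * \sum_k S i k * u k).
  rewrite (bigD1 0) //= Hu eqxx mulr1 big1 ?addr0 // => i /negbTE Hi.
  by rewrite Hu Hi mulr0.
transitivity (\sum_k (\sum_i S i j * S i k) * u k).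
  rewrite (eq_bigr (fun i => \sum_k S i j * S i k * u k)); last first.
    by move=> i _; rewrite mulr_sumr; apply: eq_bigr => k _; rewrite mulrA.
  rewrite exchange_big; apply: eq_bigr => k _; by rewrite mulr_suml.
apply: eq_bigr => k _.
have := congr1 (fun M : 'M[R]_3 => M j k) HS; rewrite !mxE.
under eq_bigr do rewrite mxE.
by move=> ->.
Qed.

Lemma qcoef (u : R) (v w : MP) :
  [/\ (qform u v w)`_2 = u%:MP, (qform u v w)`_1 = v & (qform u v w)`_0 = w].
Proof.
rewrite /qform !coefD !coefCM !coefXn coefX !coefC /=.
by rewrite !coefX /= ?mulr1 ?mulr0 ?addr0 ?add0r.
Qed.

Definition PQ (a4 a3 a2 a1 a0 : MP) : {poly MP} :=
  a4%:P * 'X^4 + a3%:P * 'X^3 + a2%:P * 'X^2 + a1%:P * 'X + a0%:P.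
Lemma cQ4 a4 a3 a2 a1 a0 : (PQ a4 a3 a2 a1 a0)`_4 = a4.
Proof. by rewrite coefQ /= mulr1 !mulr0 !addr0. Qed.
Lemma cQ3 a4 a3 a2 a1 a0 : (PQ a4 a3 a2 a1 a0)`_3 = a3.
Proof. by rewrite coefQ /= mulr1 !mulr0 !addr0 add0r. Qed.
Lemma cQ2 a4 a3 a2 a1 a0 : (PQ a4 a3 a2 a1 a0)`_2 = a2.
Proof. by rewrite coefQ /= mulr1 !mulr0 !addr0 !add0r. Qed.
Lemma cQ1 a4 a3 a2 a1 a0 : (PQ a4 a3 a2 a1 a0)`_1 = a1.
Proof. by rewrite coefQ /= mulr1 !mulr0 !addr0 !add0r. Qed.
Lemma cQ0 a4 a3 a2 a1 a0 : (PQ a4 a3 a2 a1 a0)`_0 = a0.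
Proof. by rewrite coefQ /= !mulr0 !add0r. Qed.
Lemma qsqP (u : R) (v w : MP) : qform u v w ^+ 2 =
 PQ (u%:MP * u%:MP) (2%:R * (u%:MP * v)) (v * v + 2%:R * (u%:MP * w)) (2%:R * (v * w)) (w * w).
Proof. exact: qsq. Qed.
Lemma sum3 (F : 'I_3 -> MP) : \sum_i F i = F 0 + F 1 + F 2.
Proof.
rewrite !big_ord_recl big_ord0 addr0 addrA.
by congr (_ + F _ + F _); apply: val_inj.
Qed.

Lemma xi_row (S : 'M[R]_3) (u : 'I_3 -> R) (w : 'I_3 -> MP) :
  orthogonal3 S -> maps_to_e1 S u -> xi_of S w = 2%:R * \sum_j (u j)%:MP * w j.
Proof.
move=> HS Hu; rewrite /xi_of /mact; congr (_ * _); apply: eq_bigr => j _.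
by rewrite (row0 HS Hu) mul_mpolyC.
Qed.
End H.
Unset Implicit Arguments.
Theorem lemma3p7 (R : rcfType) (f2 f3 f4 : {mpoly R[2]})
  (u : 'I_3 -> R) (v w : 'I_3 -> {mpoly R[2]}) :
  f2 \is 2.-homog -> f3 \is 3.-homog -> f4 \is 4.-homog ->
  (forall i, v i \is 1.-homog) -> (forall i, w i \is 2.-homog) ->
  'X^4 + f2%:P * 'X^2 + f3%:P * 'X + f4%:P
    = \sum_(i < 3) (qform (u i) (v i) (w i)) ^+ 2 ->
  [/\ \sum_(i < 3) u i ^+ 2 = 1,
      (forall S : 'M[R]_3, orthogonal3 S -> maps_to_e1 S u ->
         let xi := xi_of S w in
         let eta := eta_of S v w in
         [/\ eta ^+ 2 + f3 ^+ 2 = (f2 - xi) * (4%:R * f4 - xi ^+ 2),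
             psd2 (f2 - xi) & psd2 (4%:R * f4 - xi ^+ 2)]) &
      (forall (u' : 'I_3 -> R) (v' w' : 'I_3 -> {mpoly R[2]}) (T S S' : 'M[R]_3),
         orthogonal3 T ->
         (forall j : 'I_3, qform (u' j) (v' j) (w' j)
                           = \sum_(i < 3) (T i j)%:MP%:P * qform (u i) (v i) (w i)) ->
         orthogonal3 S -> maps_to_e1 S u ->
         orthogonal3 S' -> maps_to_e1 S' u' ->
         xi_of S w = xi_of S' w')].
Proof.
move=> _ _ _ _ _ H.
set uu := fun j => (u j)%:MP : {mpoly R[2]}.
have HL : 'X^4 + f2%:P * 'X^2 + f3%:P * 'X + f4%:P = PQ 1 0 f2 f3 f4 :> {poly {mpoly R[2]}}.
  rewrite /PQ. ring.
rewrite HL (eq_bigr _ (fun i _ => qsqP (u i) (v i) (w i))) in H.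
have E4 : (1 : {mpoly R[2]}) = \sum_i uu i * uu i.
  rewrite /=; transitivity ((PQ 1 0 f2 f3 f4)`_4); first by rewrite cQ4.
  rewrite H coef_sum; apply: eq_bigr => i _; exact: cQ4.
have E3 : (0 : {mpoly R[2]}) = 2%:R * \sum_i uu i * v i.
  rewrite mulr_sumr; transitivity ((PQ 1 0 f2 f3 f4)`_3); first by rewrite cQ3.
  rewrite H coef_sum; apply: eq_bigr => i _; exact: cQ3.
have E2 : f2 = \sum_i v i * v i + 2%:R * \sum_i uu i * w i.
  rewrite mulr_sumr -big_split; transitivity ((PQ 1 0 f2 f3 f4)`_2); first by rewrite cQ2.
  rewrite H coef_sum; apply: eq_bigr => i _; exact: cQ2.
have E1 : f3 = 2%:R * \sum_i v i * w i.
  rewrite mulr_sumr; transitivity ((PQ 1 0 f2 f3 f4)`_1); first by rewrite cQ1.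
  rewrite H coef_sum; apply: eq_bigr => i _; exact: cQ1.
have E0 : f4 = \sum_i w i * w i.
  rewrite /=; transitivity ((PQ 1 0 f2 f3 f4)`_0); first by rewrite cQ0.
  rewrite H coef_sum; apply: eq_bigr => i _; exact: cQ0.
clear H HL.
split.
- apply/eqP; rewrite -(mpolyC_eq 2) mpolyC1 E4 raddf_sum /=; apply/eqP.
  by apply: eq_bigr => i _; rewrite expr2 mpolyCM.
- move=> S HS Hu xi eta.
  have HSt := orthT HS.
  set U := mact S uu; set V := mact S v; set W := mact S w.
  have HU i : U i = (i == 0)%:R.
    rewrite /U /mact; transitivity ((\sum_j S i j * u j)%:MP_[2]).
      rewrite raddf_sum; by apply: eq_bigr => j _; rewrite -mul_mpolyC /uu -mpolyCM.
    by rewrite Hu (mpolyC_nat 2).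
  have U0 : U 0 = 1 by rewrite HU.
  have U1 : U 1 = 0 by rewrite HU.
  have U2 : U 2 = 0 by rewrite HU.
  rewrite -(bil HSt) sum3 in E3.
  rewrite -(bil HSt) sum3 in E2.
  rewrite -(bil HSt) sum3 in E1.
  rewrite -(bil HSt) sum3 in E0.
  rewrite -/U -/V in E3. rewrite -/U -/V -/W in E2. rewrite -/V -/W in E1. rewrite -/W in E0.
  rewrite U0 U1 U2 in E3 E2.
  have V0 : V 0 = 0.
    move: E3; rewrite !mul0r !addr0 mul1r => /esym.
    rewrite -(mpolyC_nat 2 R 2) mul_mpolyC => /eqP; rewrite scaler_eq0 pnatr_eq0 /= => /eqP.
    done.
  rewrite -(bil HSt) sum3 -/U -/W U0 U1 U2 ?V0 in E2.
  rewrite V0 in E1.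
  have Exi : xi = 2%:R * W 0 by [].
  have Eeta : eta = 2%:R * (V 1 * W 2 - V 2 * W 1) by [].
  have F2 : f2 - xi = V 1 * V 1 + V 2 * V 2.
    rewrite E2 Exi; ring.
  have F4 : 4%:R * f4 - xi ^+ 2 = 4%:R * (W 1 * W 1 + W 2 * W 2) by rewrite E0 Exi; ring.
  split.
  + by rewrite F2 F4 Eeta E1; ring.
  + rewrite F2 => a; rewrite mevalD !mevalM.
    by apply: addr_ge0; rewrite -expr2 sqr_ge0.
  + rewrite F4 => a; rewrite !(mevalM, mevalD) meval1.
    by apply: mulr_ge0; [by rewrite !addr_ge0 ?ler01 | apply: addr_ge0; rewrite -expr2 sqr_ge0].
- move=> u' v' w' T S S' HT Hq HS Hu HS' Hu'.
  have HTt : T^T^T *m T^T = 1%:M by rewrite trmxK.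
  have Hw' j : w' j = mact T^T w j.
    have [_ _ <-] := qcoef (u' j) (v' j) (w' j).
    rewrite Hq coef_sum /mact; apply: eq_bigr => i _.
    rewrite coefCM; have [_ _ ->] := qcoef (u i) (v i) (w i).
    by rewrite mxE mul_mpolyC.
  have Hu'' j : (u' j)%:MP = mact T^T uu j.
    have [<- _ _] := qcoef (u' j) (v' j) (w' j).
    rewrite Hq coef_sum /mact; apply: eq_bigr => i _.
    rewrite coefCM; have [-> _ _] := qcoef (u i) (v i) (w i).
    by rewrite mxE mul_mpolyC.
  rewrite (xi_row w HS Hu) (xi_row w' HS' Hu'); congr (_ * _).
  rewrite -(bil HTt); apply: eq_bigr => j _; by rewrite Hu'' Hw'.
Qed.
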